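(* Let $L\in(\Sigma^4_{2,8})^\star$, $L\neq0$, and let $F=\langle L,q(a,b,c)^4\rangle\in\mathbb{R}[a,b,c]_4$. Then $F$ does not vanish at any real point $\xi=(\xi_1:\xi_2:\xi_3)\in\mathbb{P}^2(\mathbb{R})$ whose associated binary quadratic form $\xi_1x^2+\xi_2xy+\xi_3y^2$ is (positive or negative) definite.
   Context: Apolarity pairing on $\mathbb{R}[x,y]$: $\langle x^{\alpha_1}y^{\alpha_2},x^{\beta_1}y^{\beta_2}\rangle=\frac{\beta_1!\beta_2!}{\alpha_1!\alpha_2!}x^{\beta_1-\alpha_1}y^{\beta_2-\alpha_2}$ if $\alpha_i\le\beta_i$, and $0$ otherwise, extended bilinearly; for $L,f\in\mathbb{R}[x,y]_8$ this is a real number. $\Sigma^4_{2,8}\subset\mathbb{R}[x,y]_8$ is the cone of finite sums of fourth powers of real binary quadratic forms and $(\Sigma^4_{2,8})^\star=\{L\in\mathbb{R}[x,y]_8:\langle L,q^4\rangle\ge0\ \forall q\in\mathbb{R}[x,y]_2\}$. With variables $a,b,c$, $q(a,b,c)=ax^2+bxy+cy^2$ and $\langle L,q(a,b,c)^4\rangle\in\mathbb{R}[a,b,c]_4$ is computed in $x,y$ treating $a,b,c$ as scalars. *)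

(* Defs.v *)
From HB Require Import structures.
From mathcomp Require Import all_boot all_order all_algebra.
From mathcomp Require Import Rstruct.
Set Implicit Arguments. Unset Strict Implicit. Unset Printing Implicit Defensive.
Import Order.TTheory GRing.Theory Num.Theory.
Local Open Scope ring_scope.

(* A binary form f(x,y) of degree 8 is encoded by the univariate polynomial
   f(t,1) : {poly R} of size <= 9; its coefficient f`_i is the coefficient of
   the monomial x^i y^(8-i). *)
Definition octic (f : {poly Rdefinitions.R}) : Prop := (size f <= 9)%N.

(* Apolarity pairing of two monomials x^i y^(8-i) and x^j y^(8-j) of degree 8:
   (beta1! beta2!)/(alpha1! alpha2!) x^(beta1-alpha1) y^(beta2-alpha2) if alpha <= beta
   componentwise, 0 otherwise (the remaining monomial has degree 0, i.e. is 1). *)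
Definition apolar_mon8 (i j : nat) : Rdefinitions.R :=
  if (i <= j)%N && (8 - i <= 8 - j)%N
  then ((j`! * (8 - j)`!)%:R / (i`! * (8 - i)`!)%:R)
  else 0.

Definition apolar8 (L f : {poly Rdefinitions.R}) : Rdefinitions.R :=
  \sum_(i < 9) \sum_(j < 9) L`_i * f`_j * apolar_mon8 i j.

(* q(a,b,c) = a x^2 + b x y + c y^2, dehomogenized at y = 1. *)
Definition quad (a b c : Rdefinitions.R) : {poly Rdefinitions.R} :=
  a *: 'X^2 + b *: 'X + c%:P.

Definition in_dual_Sigma4 (L : {poly Rdefinitions.R}) : Prop :=
  octic L /\ forall a b c : Rdefinitions.R, 0 <= apolar8 L (quad a b c ^+ 4).

(* F = <L, q(a,b,c)^4> in R[a,b,c]_4, evaluated at (a,b,c) (computed treating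
   a, b, c as scalars). *)
Definition Feval (L : {poly Rdefinitions.R}) (a b c : Rdefinitions.R) : Rdefinitions.R :=
  apolar8 L (quad a b c ^+ 4).

Definition definite_quad (a b c : Rdefinitions.R) : Prop :=
  (forall x y : Rdefinitions.R, (x, y) != (0, 0) -> 0 < a * x ^+ 2 + b * x * y + c * y ^+ 2)
  \/
  (forall x y : Rdefinitions.R, (x, y) != (0, 0) -> a * x ^+ 2 + b * x * y + c * y ^+ 2 < 0).

(* Main.v *)
Require Import Defs.
From mathcomp Require Import all_boot all_order all_algebra.
From mathcomp Require Import Rstruct.
From mathcomp Require Import ring lra zify.
Set Implicit Arguments. Unset Strict Implicit. Unset Printing Implicit Defensive.
Import Order.TTheory GRing.Theory Num.Theory.
Local Open Scope ring_scope.
Notation R := Rdefinitions.R.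

Definition Ecoefs (a b c : R) : seq R :=
  [:: c^+4; 4*b*c^+3; 6*b^+2*c^+2 + 4*a*c^+3; 4*b^+3*c + 12*a*b*c^+2;
      b^+4 + 12*a*b^+2*c + 6*a^+2*c^+2; 4*a*b^+3 + 12*a^+2*b*c;
      6*a^+2*b^+2 + 4*a^+3*c; 4*a^+3*b; a^+4].

Lemma quad4E a b c : quad a b c ^+ 4 = Poly (Ecoefs a b c).
Proof.
rewrite /quad /Ecoefs /= !cons_poly_def mul0r add0r.
rewrite -!mul_polyC !rmorphD !rmorphM /=.
ring.
Qed.

Lemma apolar_mon8E (i j : 'I_9) : apolar_mon8 i j = (i == j)%:R.
Proof.
rewrite /apolar_mon8.
case: (eqVneq i j) => [->|nij].
  rewrite !leqnn /= mulfV //. by rewrite pnatr_eq0 muln_eq0 negb_or -!lt0n !fact_gt0.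
have := ltn_ord i; have := ltn_ord j => hi hj.
case: ifP => // /andP [h1 h2].
exfalso; move/negP: nij; apply; apply/eqP/val_inj => /=. lia.
Qed.

Lemma apolar8E L f : apolar8 L f = \sum_(i < 9) L`_i * f`_i.
Proof.
rewrite /apolar8; apply: eq_bigr => i _.
rewrite (bigD1 i) //= big1 ?addr0; first by rewrite apolar_mon8E eqxx mulr1.
by move=> j nj; rewrite apolar_mon8E eq_sym (negPf nj) mulr0.
Qed.

Definition E (l : nat -> R) (a b c : R) : R :=
  l 0%N * c^+4 + l 1%N * (4*b*c^+3) + l 2%N * (6*b^+2*c^+2 + 4*a*c^+3)
  + l 3%N * (4*b^+3*c + 12*a*b*c^+2) + l 4%N * (b^+4 + 12*a*b^+2*c + 6*a^+2*c^+2)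
  + l 5%N * (4*a*b^+3 + 12*a^+2*b*c) + l 6%N * (6*a^+2*b^+2 + 4*a^+3*c)
  + l 7%N * (4*a^+3*b) + l 8%N * a^+4.

Lemma FevalE L a b c : Feval L a b c = E (fun i => L`_i) a b c.
Proof.
rewrite /Feval apolar8E quad4E. under eq_bigr => i _ do rewrite coef_Poly. rewrite !big_ord_recr big_ord0 /= /E.
ring.
Qed.

Lemma E_opp l a b c : E l (-a) (-b) (-c) = E l a b c.
Proof. rewrite /E; ring. Qed.

Definition N (l : nat -> R) (h : R) (j : nat) : R :=
  match j with
  | 0 => 1%:R * h^+0 * l 0%N
  | 1 => 1%:R * h^+1 * l 0%N + 1%:R * h^+0 * l 1%N
  | 2 => 1%:R * h^+2 * l 0%N + 2%:R * h^+1 * l 1%N + 1%:R * h^+0 * l 2%N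
  | 3 => 1%:R * h^+3 * l 0%N + 3%:R * h^+2 * l 1%N + 3%:R * h^+1 * l 2%N + 1%:R * h^+0 * l 3%N
  | 4 => 1%:R * h^+4 * l 0%N + 4%:R * h^+3 * l 1%N + 6%:R * h^+2 * l 2%N + 4%:R * h^+1 * l 3%N + 1%:R * h^+0 * l 4%N
  | 5 => 1%:R * h^+5 * l 0%N + 5%:R * h^+4 * l 1%N + 10%:R * h^+3 * l 2%N + 10%:R * h^+2 * l 3%N + 5%:R * h^+1 * l 4%N + 1%:R * h^+0 * l 5%N
  | 6 => 1%:R * h^+6 * l 0%N + 6%:R * h^+5 * l 1%N + 15%:R * h^+4 * l 2%N + 20%:R * h^+3 * l 3%N + 15%:R * h^+2 * l 4%N + 6%:R * h^+1 * l 5%N + 1%:R * h^+0 * l 6%N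
  | 7 => 1%:R * h^+7 * l 0%N + 7%:R * h^+6 * l 1%N + 21%:R * h^+5 * l 2%N + 35%:R * h^+4 * l 3%N + 35%:R * h^+3 * l 4%N + 21%:R * h^+2 * l 5%N + 7%:R * h^+1 * l 6%N + 1%:R * h^+0 * l 7%N
  | 8 => 1%:R * h^+8 * l 0%N + 8%:R * h^+7 * l 1%N + 28%:R * h^+6 * l 2%N + 56%:R * h^+5 * l 3%N + 70%:R * h^+4 * l 4%N + 56%:R * h^+3 * l 5%N + 28%:R * h^+2 * l 6%N + 8%:R * h^+1 * l 7%N + 1%:R * h^+0 * l 8%N
  | _ => 0 end.

Lemma key l h u v :
  E l (u^+2) (2*u*(u*h+v)) ((u*h+v)^+2) = 1%:R * u^+0 * v^+8 * N l h 0%N + 8%:R * u^+1 * v^+7 * N l h 1%N + 28%:R * u^+2 * v^+6 * N l h 2%N + 56%:R * u^+3 * v^+5 * N l h 3%N + 70%:R * u^+4 * v^+4 * N l h 4%N + 56%:R * u^+5 * v^+3 * N l h 5%N + 28%:R * u^+6 * v^+2 * N l h 6%N + 8%:R * u^+7 * v^+1 * N l h 7%N + 1%:R * u^+8 * v^+0 * N l h 8%N.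
Proof. rewrite /E /N; ring. Qed.

Lemma keymu l h s t :
  E l (s^+2) (2*s^+2*h) (s^+2*h^+2+t^+2) =
  t^+8 * N l h 0%N + 4 * s^+2*t^+6 * N l h 2%N + 6 * s^+4*t^+4 * N l h 4%N
  + 4 * s^+6*t^+2 * N l h 6%N + s^+8 * N l h 8%N.
Proof. rewrite /E /N; ring. Qed.
Definition G (M : nat -> R) (s t : R) : R :=
  1%:R * s^+0 * t^+8 * M 0%N + 8%:R * s^+1 * t^+7 * M 1%N + 28%:R * s^+2 * t^+6 * M 2%N + 56%:R * s^+3 * t^+5 * M 3%N + 70%:R * s^+4 * t^+4 * M 4%N + 56%:R * s^+5 * t^+3 * M 5%N + 28%:R * s^+6 * t^+2 * M 6%N + 8%:R * s^+7 * t^+1 * M 7%N + 1%:R * s^+8 * t^+0 * M 8%N.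

Lemma Gcore (M : nat -> R) : (forall s t, 0 <= G M s t) ->
  M 0%N + 4 * M 2%N + 6 * M 4%N + 4 * M 6%N + M 8%N = 0 ->
  forall j, (j < 9)%N -> M j = 0.
Proof.
move=> H hz.
have h0 := H 1 0.
have h1 := H 0 1.
have h2 := H 1 1.
have h3 := H 1 (-1).
have h4 := H 4 1.
have h5 := H 4 (-1).
have h6 := H 1 4.
have h7 := H 1 (-4).
have h8 := H 2 1.
have h9 := H 2 (-1).
have h10 := H 1 2.
have h11 := H 1 (-2).
rewrite /G in h0 h1 h2 h3 h4 h5 h6 h7 h8 h9 h10 h11.
do 9 (case=> [_|]; first by lra).
by [].
Qed.

Lemma core_pos (l : nat -> R) (H : forall a b c, 0 <= E l a b c) a b c :
  0 < a -> 0 < 4*a*c - b^+2 -> E l a b c = 0 -> forall i, (i < 9)%N -> l i = 0.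
Proof.
move=> ha hd hz.
pose σ := Num.sqrt a.
pose d := c - b^+2/(4*a).
have a0 : a != 0 by rewrite gt_eqF.
have ed : d = (4*a*c - b^+2)/(4*a) by rewrite /d; field.
have hd' : 0 < d by rewrite ed divr_gt0 // mulr_gt0.
pose τ := Num.sqrt d.
pose h := b/(2*a).
have hs2 : σ^+2 = a by rewrite sqr_sqrtr // ltW.
have ht2 : τ^+2 = d by rewrite sqr_sqrtr // ltW.
have sp : 0 < σ by rewrite sqrtr_gt0.
have tp : 0 < τ by rewrite sqrtr_gt0.
have eb : b = 2*σ^+2*h by rewrite hs2 /h; field.
have ec : c = σ^+2*h^+2+τ^+2 by rewrite hs2 ht2 /h /d; field.
have ea : a = σ^+2 by [].
rewrite ec eb ea keymu in hz.
pose M := fun j => σ^+j * τ^+(8-j) * N l h j.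
have hG : forall s t, 0 <= G M s t.
  move=> s t.
  have -> : G M s t = 1%:R * (s*σ)^+0 * (t*τ)^+8 * N l h 0%N + 8%:R * (s*σ)^+1 * (t*τ)^+7 * N l h 1%N + 28%:R * (s*σ)^+2 * (t*τ)^+6 * N l h 2%N + 56%:R * (s*σ)^+3 * (t*τ)^+5 * N l h 3%N + 70%:R * (s*σ)^+4 * (t*τ)^+4 * N l h 4%N + 56%:R * (s*σ)^+5 * (t*τ)^+3 * N l h 5%N + 28%:R * (s*σ)^+6 * (t*τ)^+2 * N l h 6%N + 8%:R * (s*σ)^+7 * (t*τ)^+1 * N l h 7%N + 1%:R * (s*σ)^+8 * (t*τ)^+0 * N l h 8%N by rewrite /G /M /=; ring.
  rewrite -key; exact: H.
have hmu : M 0%N + 4 * M 2%N + 6 * M 4%N + 4 * M 6%N + M 8%N = 0.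
  by rewrite -hz /M /=; ring.
have hM := Gcore hG hmu.
have hN : forall j, (j < 9)%N -> N l h j = 0.
  move=> j hj; have := hM j hj; rewrite /M => /eqP.
  rewrite !mulf_eq0 !expf_eq0 !(gt_eqF sp) !(gt_eqF tp) !andbF /= => /eqP //.
have e0 : l 0%N = 0 by rewrite -[RHS](hN 0%N) // /N ; ring.
have e1 : l 1%N = 0 by rewrite -[RHS](hN 1%N) // /N e0; ring.
have e2 : l 2%N = 0 by rewrite -[RHS](hN 2%N) // /N e0 e1; ring.
have e3 : l 3%N = 0 by rewrite -[RHS](hN 3%N) // /N e0 e1 e2; ring.
have e4 : l 4%N = 0 by rewrite -[RHS](hN 4%N) // /N e0 e1 e2 e3; ring.
have e5 : l 5%N = 0 by rewrite -[RHS](hN 5%N) // /N e0 e1 e2 e3 e4; ring.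
have e6 : l 6%N = 0 by rewrite -[RHS](hN 6%N) // /N e0 e1 e2 e3 e4 e5; ring.
have e7 : l 7%N = 0 by rewrite -[RHS](hN 7%N) // /N e0 e1 e2 e3 e4 e5 e6; ring.
have e8 : l 8%N = 0 by rewrite -[RHS](hN 8%N) // /N e0 e1 e2 e3 e4 e5 e6 e7; ring.
do 9 (case=> [_|]; first by []).
by [].
Qed.

Theorem mainTheorem11 (L : {poly Rdefinitions.R}) :
  in_dual_Sigma4 L -> L != 0 ->
  forall xi1 xi2 xi3 : Rdefinitions.R,
    (xi1, xi2, xi3) != (0, 0, 0) ->
    definite_quad xi1 xi2 xi3 ->
    Feval L xi1 xi2 xi3 != 0.
Proof.
move=> [oct Hd] L0 x1 x2 x3 _ hdef.
pose l := fun i => L`_i.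
have H : forall a b c, 0 <= E l a b c by move=> a b c; rewrite -FevalE; apply: Hd.
rewrite FevalE; apply/eqP => hz.
have hl : forall i, (i < 9)%N -> l i = 0.
  case: hdef => P.
  - have h1 := P 1 0 ltac:(by rewrite xpair_eqE oner_eq0).
    have ha : 0 < x1.
      move: h1; rewrite (_ : x1 * 1 ^+ 2 + x2 * 1 * 0 + x3 * 0 ^+ 2 = x1) //; ring.
    have h2 := P x2 (-(2*x1)) ltac:(rewrite xpair_eqE negb_and oppr_eq0 mulf_eq0 negb_or; apply/orP; right; apply/andP; split; apply/negP => /eqP ?; lra).
    rewrite (_ : x1 * x2 ^+ 2 + x2 * x2 * - (2 * x1) + x3 * (- (2 * x1)) ^+ 2
       = x1 * (4*x1*x3 - x2^+2)) in h2; last by ring.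
    rewrite pmulr_rgt0 // in h2.
    exact: core_pos H _ _ _ ha h2 hz.
  - have h1 := P 1 0 ltac:(by rewrite xpair_eqE oner_eq0).
    have ha : x1 < 0.
      move: h1; rewrite (_ : x1 * 1 ^+ 2 + x2 * 1 * 0 + x3 * 0 ^+ 2 = x1) //; ring.
    have h2 := P x2 (-(2*x1)) ltac:(rewrite xpair_eqE negb_and oppr_eq0 mulf_eq0 negb_or; apply/orP; right; apply/andP; split; apply/negP => /eqP ?; lra).
    rewrite (_ : x1 * x2 ^+ 2 + x2 * x2 * - (2 * x1) + x3 * (- (2 * x1)) ^+ 2
       = x1 * (4*x1*x3 - x2^+2)) in h2; last by ring.
    rewrite nmulr_rlt0 // in h2.
    apply: (core_pos H (a := - x1) (b := - x2) (c := - x3)).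
    + by rewrite oppr_gt0.
    + by rewrite (_ : 4 * - x1 * - x3 - (- x2) ^+ 2 = 4*x1*x3 - x2^+2) //; ring.
    + by rewrite E_opp.
move/eqP: L0; apply; apply/polyP => i; rewrite coef0.
case: (ltnP i 9) => hi; first exact: hl i hi.
by rewrite nth_default // (leq_trans oct hi).
Qed.
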